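(* Let $\varphi$ be an IPDL-formula all of whose propositional variables are among $p_1,\ldots,p_n$ and all of whose atomic program terms are among $a_1,\ldots,a_l$ ($l\ge1$), and let $\varphi^*$ be the variable-free formula constructed from $\varphi$ as in the context. Then $\varphi$ is satisfiable if, and only if, $\varphi^*$ is satisfiable.
   Context: Fix a countable set $\mathit{Var}=\{p_1,p_2,\ldots\}$ of propositional variables and a countable set $AP=\{a_1,a_2,\ldots\}$ of atomic program terms. IPDL formulas and program terms are defined simultaneously by $\varphi ::= p \mid \bot \mid (\varphi\rightarrow\varphi)\mid [\alpha]\varphi$ and $\alpha ::= a \mid \varphi? \mid (\alpha;\alpha)\mid(\alpha\cup\alpha)\mid(\alpha\cap\alpha)\mid \alpha^*$ ($p\in\mathit{Var}$, $a\in AP$); $\neg,\wedge,\top$ etc. are defined as usual and $\langle\alpha\rangle\psi=\neg[\alpha]\neg\psi$. A Kripke model is $\mathfrak{M}=(S,\{R_a\}_{a\in AP},V)$, $S\neq\varnothing$, $R_a\subseteq S\times S$, $V:\mathit{Var}\to2^S$; $(s,t)\in R_{\psi?}$ iff $s=t$ and $\mathfrak{M},s\models\psi$; $R_{\alpha;\beta}$ is relational composition; $R_{\alpha\cup\beta}=R_\alpha\cup R_\beta$; $R_{\alpha\cap\beta}=R_\alpha\cap R_\beta$; $R_{\alpha^*}$ is the reflexive transitive closure of $R_\alpha$; $\mathfrak{M},s\models p$ iff $s\in V(p)$; $\bot$ is never true; $\rightarrow$ is classical; $\mathfrak{M},s\models[\alpha]\psi$ iff $\psi$ holds at all $R_\alpha$-successors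 of $s$. A formula is satisfiable if true at some state of some model. Construction: let $\gamma=a_1\cup\cdots\cup a_l$. The translation $\cdot'$: $a_j'=a_j$; $(\alpha;\beta)'=\alpha';\beta'$; $(\alpha\cup\beta)'=\alpha'\cup\beta'$; $(\alpha\cap\beta)'=\alpha'\cap\beta'$; $(\alpha^* )'=(\alpha')^*$; $(\psi?)'=(\psi')?$; $p_i'=p_i$ ($i\le n$); $\bot'=\bot$; $(\psi\rightarrow\chi)'=\psi'\rightarrow\chi'$; $([\alpha]\psi)'=[\alpha'](p_{n+1}\rightarrow\psi')$. Let $\Theta=p_{n+1}\wedge[\gamma^*](\langle\gamma\rangle p_{n+1}\rightarrow p_{n+1})$ and $\widehat{\varphi}=\Theta\wedge\varphi'$. Let $b$ be the lexicographically first atomic program term occurring in $\varphi$ if there is one, and $b=a_1$ otherwise. Define $\langle b\rangle^0\psi=\psi$, $\langle b\rangle^{j+1}\psi=\langle b\rangle\langle b\rangle^j\psi$, and for $m\in\{1,\ldots,n+1\}$: $A_m=\langle b\rangle^m[b]\bot\wedge\neg\langle b\rangle^{m+1}[b]\bot\wedge\langle b\rangle(\langle b\rangle\top\wedge[b]\langle b\rangle\top)$ and $B_m=\langle b\rangle A_m$. Let $\sigma$ be the substitution replacing every occurrence of $p_i$ by $B_i$ for $1\le i\le n+1$, and $\varphi^*=\sigma(\widehat{\varphi})$. *)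

(* Defs.v *)
From Stdlib Require Import List Arith Relations Bool.
Import ListNotations.

(* Var i stands for p_i and Atom j for a_j (the paper's indices start at 1;
   index 0 is never used in the hypotheses of the main theorem). *)
Inductive form : Type :=
| Var : nat -> form
| Bot : form
| Imp : form -> form -> form
| Box : prog -> form -> form
with prog : Type :=
| Atom : nat -> prog
| Test : form -> prog
| Seq : prog -> prog -> prog
| Union : prog -> prog -> prog
| Cap : prog -> prog -> prog
| Star : prog -> prog.

Definition Neg (f : form) : form := Imp f Bot.
Definition Top : form := Neg Bot.
Definition And (f g : form) : form := Neg (Imp f (Neg g)).
Definition Dia (a : prog) (f : form) : form := Neg (Box a (Neg f)).

Record model : Type := Model {
  St : Type;
  Rel : nat -> St -> St -> Prop;
  Val : nat -> St -> Prop
}.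

Fixpoint sat (M : model) (s : St M) (f : form) {struct f} : Prop :=
  match f with
  | Var i => Val M i s
  | Bot => False
  | Imp f1 f2 => sat M s f1 -> sat M s f2
  | Box a g => forall t, rel M a s t -> sat M t g
  end
with rel (M : model) (a : prog) {struct a} : St M -> St M -> Prop :=
  match a with
  | Atom j => Rel M j
  | Test f => fun s t => s = t /\ sat M s f
  | Seq a1 a2 => fun s u => exists t, rel M a1 s t /\ rel M a2 t u
  | Union a1 a2 => fun s t => rel M a1 s t \/ rel M a2 s t
  | Cap a1 a2 => fun s t => rel M a1 s t /\ rel M a2 s t
  | Star a1 => clos_refl_trans (St M) (rel M a1)
  end.

Definition satisfiable (f : form) : Prop :=
  exists (M : model) (s : St M), sat M s f.

Fixpoint vars_f (f : form) : list nat :=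
  match f with
  | Var i => [i]
  | Bot => []
  | Imp f1 f2 => vars_f f1 ++ vars_f f2
  | Box a g => vars_p a ++ vars_f g
  end
with vars_p (a : prog) : list nat :=
  match a with
  | Atom _ => []
  | Test f => vars_f f
  | Seq a1 a2 | Union a1 a2 | Cap a1 a2 => vars_p a1 ++ vars_p a2
  | Star a1 => vars_p a1
  end.

Fixpoint atoms_f (f : form) : list nat :=
  match f with
  | Var _ => []
  | Bot => []
  | Imp f1 f2 => atoms_f f1 ++ atoms_f f2
  | Box a g => atoms_p a ++ atoms_f g
  end
with atoms_p (a : prog) : list nat :=
  match a with
  | Atom j => [j]
  | Test f => atoms_f f
  | Seq a1 a2 | Union a1 a2 | Cap a1 a2 => atoms_p a1 ++ atoms_p a2
  | Star a1 => atoms_p a1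
  end.

Fixpoint gamma_aux (l : nat) : prog :=
  match l with
  | 0 => Atom 1
  | S 0 => Atom 1
  | S k => Union (gamma_aux k) (Atom (S k))
  end.
Definition gamma (l : nat) : prog := gamma_aux l.

Fixpoint tr_f (n : nat) (f : form) : form :=
  match f with
  | Var i => Var i
  | Bot => Bot
  | Imp f1 f2 => Imp (tr_f n f1) (tr_f n f2)
  | Box a g => Box (tr_p n a) (Imp (Var (S n)) (tr_f n g))
  end
with tr_p (n : nat) (a : prog) : prog :=
  match a with
  | Atom j => Atom j
  | Test f => Test (tr_f n f)
  | Seq a1 a2 => Seq (tr_p n a1) (tr_p n a2)
  | Union a1 a2 => Union (tr_p n a1) (tr_p n a2)
  | Cap a1 a2 => Cap (tr_p n a1) (tr_p n a2)
  | Star a1 => Star (tr_p n a1)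
  end.

Definition Theta (n l : nat) : form :=
  And (Var (S n))
      (Box (Star (gamma l)) (Imp (Dia (gamma l) (Var (S n))) (Var (S n)))).

Definition hat (n l : nat) (f : form) : form := And (Theta n l) (tr_f n f).

Definition first_atom (f : form) : nat :=
  match atoms_f f with
  | [] => 1
  | x :: xs => fold_left Nat.min xs x
  end.

Fixpoint dia_iter (b : nat) (k : nat) (f : form) : form :=
  match k with
  | 0 => f
  | S k' => Dia (Atom b) (dia_iter b k' f)
  end.

Definition A_form (b m : nat) : form :=
  And (dia_iter b m (Box (Atom b) Bot))
      (And (Neg (dia_iter b (S m) (Box (Atom b) Bot)))
           (Dia (Atom b) (And (Dia (Atom b) Top) (Box (Atom b) (Dia (Atom b) Top))))).

Definition B_form (b m : nat) : form := Dia (Atom b) (A_form b m).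

Fixpoint subst_f (s : nat -> form) (f : form) : form :=
  match f with
  | Var i => s i
  | Bot => Bot
  | Imp f1 f2 => Imp (subst_f s f1) (subst_f s f2)
  | Box a g => Box (subst_p s a) (subst_f s g)
  end
with subst_p (s : nat -> form) (a : prog) : prog :=
  match a with
  | Atom j => Atom j
  | Test f => Test (subst_f s f)
  | Seq a1 a2 => Seq (subst_p s a1) (subst_p s a2)
  | Union a1 a2 => Union (subst_p s a1) (subst_p s a2)
  | Cap a1 a2 => Cap (subst_p s a1) (subst_p s a2)
  | Star a1 => Star (subst_p s a1)
  end.

Definition sigma (n : nat) (b : nat) : nat -> form :=
  fun i => if andb (1 <=? i) (i <=? S n) then B_form b i else Var i.

Definition star_form (n l : nat) (f : form) : form :=
  subst_f (sigma n (first_atom f)) (hat n l f).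

(* Main.v *)
Require Import Defs.
From Stdlib Require Import List Arith Relations Bool Lia Classical.
Import ListNotations.

Scheme form_ind2 := Induction for form Sort Prop
with prog_ind2 := Induction for prog Sort Prop.
Combined Scheme form_prog_ind from form_ind2, prog_ind2.

Lemma sat_Neg M x f : sat M x (Neg f) <-> ~ sat M x f.
Proof. simpl. tauto. Qed.

Lemma sat_And M x f g : sat M x (And f g) <-> sat M x f /\ sat M x g.
Proof.
  simpl. split; intros H.
  - destruct (classic (sat M x f)), (classic (sat M x g)); tauto.
  - tauto.
Qed.

Lemma sat_Dia M x a f : sat M x (Dia a f) <-> exists y, rel M a x y /\ sat M y f.
Proof.
  simpl. split; intros H.
  - apply NNPP; intro H'; apply H; intros t r s; apply H'; eauto.
  - destruct H as [y [r s]]; intro H; eapply H; eauto.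
Qed.

Lemma sat_Top M x : sat M x Top.
Proof. simpl. tauto. Qed.

Lemma crt_iff (T : Type) (R1 R2 : T -> T -> Prop) :
  (forall x y, R1 x y <-> R2 x y) -> forall x y, clos_refl_trans T R1 x y <-> clos_refl_trans T R2 x y.
Proof.
  intros H x y; split; intro C; induction C.
  - apply rt_step, H; auto.
  - apply rt_refl.
  - eapply rt_trans; eauto.
  - apply rt_step, H; auto.
  - apply rt_refl.
  - eapply rt_trans; eauto.
Qed.

Definition msub (M : model) (s : nat -> form) : model :=
  Model (St M) (Rel M) (fun i x => sat M x (s i)).

Lemma subst_sat M s :
  (forall f x, sat M x (subst_f s f) <-> sat (msub M s) x f) /\
  (forall a x y, rel M (subst_p s a) x y <-> rel (msub M s) a x y).
Proof.
  apply form_prog_ind; simpl; intros.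
  - reflexivity.
  - reflexivity.
  - rewrite H, H0; reflexivity.
  - split; intros H1 t r; apply H0; apply H1; apply H; auto.
  - reflexivity.
  - rewrite H; reflexivity.
  - split; intros [t [r1 r2]]; exists t; rewrite H, H0 in *; auto.
  - rewrite H, H0; reflexivity.
  - rewrite H, H0; reflexivity.
  - apply crt_iff; auto.
Qed.

Lemma gamma_in N l j x y : 1 <= l -> 1 <= j <= l -> Rel N j x y -> rel N (gamma l) x y.
Proof.
  unfold gamma. induction l; intros Hl Hj Hr; [lia|].
  destruct l.
  - simpl. assert (j = 1) by lia. subst; auto.
  - change (gamma_aux (S (S l))) with (Union (gamma_aux (S l)) (Atom (S (S l)))).
    simpl. destruct (Nat.eq_dec j (S (S l))).
    + subst; auto.
    + left. apply IHl; auto; lia.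
Qed.

Definition Rr N s l x := clos_refl_trans (St N) (rel N (gamma l)) s x.
Definition good N s n l x := Rr N s l x /\ Val N (S n) x.
Definition Mrel N s n l : model :=
  Model (St N) (fun j x y => Rel N j x y /\ good N s n l x /\ good N s n l y) (Val N).

Lemma in_app_l {A} (x : A) l1 l2 : In x l1 -> In x (l1 ++ l2).
Proof. intros; apply in_or_app; auto. Qed.
Lemma in_app_r {A} (x : A) l1 l2 : In x l2 -> In x (l1 ++ l2).
Proof. intros; apply in_or_app; auto. Qed.

Lemma relat N s n l (Hl : 1 <= l)
  (Hcl : forall t, Rr N s l t -> forall v, rel N (gamma l) t v -> Val N (S n) v -> Val N (S n) t) :
  (forall f, (forall j, In j (atoms_f f) -> 1 <= j <= l) ->
     forall x, good N s n l x -> (sat (Mrel N s n l) x f <-> sat N x (tr_f n f))) /\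
  (forall a, (forall j, In j (atoms_p a) -> 1 <= j <= l) ->
     (forall x u, Rr N s l x -> rel N (tr_p n a) x u ->
        Rr N s l u /\ (Val N (S n) u -> Val N (S n) x /\ rel (Mrel N s n l) a x u)) /\
     (forall x u, good N s n l x -> rel (Mrel N s n l) a x u ->
        rel N (tr_p n a) x u /\ good N s n l u)).
Proof.
  apply form_prog_ind; simpl; intros.
  - reflexivity.
  - reflexivity.
  - rewrite H, H0; auto using in_app_l, in_app_r; reflexivity.
  - destruct (H (fun j h => H1 j (in_app_l _ _ _ h))) as [H3 H4].
    split.
    + intros H5 t r v. destruct (H3 x t (proj1 H2) r) as [Rt Ht].
      destruct (Ht v) as [_ Hm].
      apply H0; auto using in_app_r. split; auto.
    + intros H5 t r. destruct (H4 x t H2 r) as [r' gt].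
      apply H0; auto using in_app_r. apply H5; auto. apply gt.
  - split.
    + intros x u Rx r. assert (Ru : Rr N s l u).
      { eapply rt_trans; [exact Rx|]. apply rt_step. apply gamma_in with n0; auto. }
      split; auto. intros vu. assert (vx : Val N (S n) x) by (eapply Hcl; eauto; apply gamma_in with n0; auto).
      split; auto. repeat split; auto.
    + intros x u gx [r [_ gu]]. auto.
  - split.
    + intros x u Rx [e r]. subst u. split; auto. intros v; split; auto.
      split; auto. apply H; auto. split; auto.
    + intros x u gx [e r]. subst u. split; auto. split; auto. apply H; auto.
  - destruct (H (fun j h => H1 j (in_app_l _ _ _ h))) as [A1 B1].
    destruct (H0 (fun j h => H1 j (in_app_r _ _ _ h))) as [A2 B2].
    split.
    + intros x u Rx [t [r1 r2]]. destruct (A1 _ _ Rx r1) as [Rt F1].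
      destruct (A2 _ _ Rt r2) as [Ru F2]. split; auto.
      intros vu. destruct (F2 vu) as [vt m2]. destruct (F1 vt) as [vx m1].
      split; eauto.
    + intros x u gx [t [r1 r2]]. destruct (B1 _ _ gx r1) as [r1' gt].
      destruct (B2 _ _ gt r2) as [r2' gu]. split; eauto.
  - destruct (H (fun j h => H1 j (in_app_l _ _ _ h))) as [A1 B1].
    destruct (H0 (fun j h => H1 j (in_app_r _ _ _ h))) as [A2 B2].
    split.
    + intros x u Rx [r|r].
      * destruct (A1 _ _ Rx r) as [Ru F]. split; auto. intros vu; destruct (F vu); auto.
      * destruct (A2 _ _ Rx r) as [Ru F]. split; auto. intros vu; destruct (F vu); auto.
    + intros x u gx [r|r].
      * destruct (B1 _ _ gx r); auto.
      * destruct (B2 _ _ gx r); auto.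
  - destruct (H (fun j h => H1 j (in_app_l _ _ _ h))) as [A1 B1].
    destruct (H0 (fun j h => H1 j (in_app_r _ _ _ h))) as [A2 B2].
    split.
    + intros x u Rx [r r'].
      destruct (A1 _ _ Rx r) as [Ru F]. destruct (A2 _ _ Rx r') as [_ F'].
      split; auto. intros vu; destruct (F vu), (F' vu); auto.
    + intros x u gx [r r'].
      destruct (B1 _ _ gx r), (B2 _ _ gx r'); auto.
  - destruct (H H0) as [A1 B1]. split.
    + intros x u Rx C. revert Rx. induction C; intros Rx.
      * destruct (A1 _ _ Rx H1) as [Ry F]. split; auto.
        intros vy; destruct (F vy); split; auto. apply rt_step; auto.
      * split; auto. intros; split; auto. apply rt_refl.
      * destruct (IHC1 Rx) as [Ry F1]. destruct (IHC2 Ry) as [Rz F2].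
        split; auto. intros vz. destruct (F2 vz) as [vy m2]. destruct (F1 vy) as [vx m1].
        split; auto. eapply rt_trans; eauto.
    + intros x u gx C. revert gx. induction C; intros gx.
      * destruct (B1 _ _ gx H1). split; auto. apply rt_step; auto.
      * split; auto. apply rt_refl.
      * destruct (IHC1 gx) as [r1 gy]. destruct (IHC2 gy) as [r2 gz].
        split; auto. eapply rt_trans; eauto.
Qed.

Fixpoint pathb (M : model) b k (x y : St M) : Prop :=
  match k with
  | 0 => x = y
  | S k => exists z, Rel M b x z /\ pathb M b k z y
  end.

Lemma sat_dia_iter M b k f x :
  sat M x (dia_iter b k f) <-> exists y, pathb M b k x y /\ sat M y f.
Proof.
  revert x; induction k; intros x; simpl dia_iter.
  - simpl. split; [eauto | intros [y [e s]]; subst; auto].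
  - rewrite sat_Dia. simpl. split.
    + intros [z [r s]]. apply IHk in s. destruct s as [y [p s]]. eauto.
    + intros [y [[z [r p]] s]]. exists z; split; auto. apply IHk; eauto.
Qed.

Definition dead M b (y : St M) := forall z, ~ Rel M b y z.

Lemma sat_DE M b k x :
  sat M x (dia_iter b k (Box (Atom b) Bot)) <-> exists y, pathb M b k x y /\ dead M b y.
Proof.
  rewrite sat_dia_iter. simpl. unfold dead. split; intros [y [p d]]; exists y; split; auto;
  intros z r; eapply d; eauto.
Qed.

Definition NNp M b (x : St M) := (exists y, Rel M b x y) /\ (forall y, Rel M b x y -> exists z, Rel M b y z).

Lemma sat_A M b m x :
  sat M x (A_form b m) <->
  (exists y, pathb M b m x y /\ dead M b y) /\
  ~ (exists y, pathb M b (S m) x y /\ dead M b y) /\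
  (exists y, Rel M b x y /\ NNp M b y).
Proof.
  unfold A_form. rewrite !sat_And, sat_Neg, !sat_DE, sat_Dia.
  unfold NNp. simpl rel.
  split; intros [H1 [H2 [y [r H3]]]]; (split; [auto|split; [auto|exists y; split; auto]]).
  - apply sat_And in H3. destruct H3 as [H3 H4]. apply sat_Dia in H3.
    destruct H3 as [z [rz _]]. split; eauto.
    intros w rw. specialize (H4 w rw). apply sat_Dia in H4. destruct H4 as [v [rv _]]; eauto.
  - apply sat_And. destruct H3 as [[z rz] H4]. split.
    + apply sat_Dia; exists z; split; auto; apply sat_Top.
    + simpl. intros w rw. destruct (H4 w rw) as [v rv]. intro H; apply (H v rv). tauto.
Qed.

Lemma sat_B M b m x :
  sat M x (B_form b m) <-> exists y, Rel M b x y /\ sat M y (A_form b m).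
Proof. unfold B_form. rewrite sat_Dia. reflexivity. Qed.

Inductive gad := GC (k : nat) | GY | GG (i : nat).

Definition gstep (g h : gad) : Prop :=
  match g, h with
  | GC k, GC k' => k' < k
  | GY, GY => True
  | GG i, GC k => k = i - 1
  | GG i, GY => True
  | _, _ => False
  end.

Definition lab (M : model) n (x : St M) (g : gad) : Prop :=
  match g with
  | GC _ => True
  | GY => False
  | GG i => (1 <= i <= n /\ Val M i x) \/ i = S n
  end.

Definition NRel (M : model) n b j (x y : St M + gad) : Prop :=
  match x, y with
  | inl a, inl c => Rel M j a c
  | inl a, inr g => j = b /\ lab M n a g
  | inr _, inl _ => False
  | inr g, inr h => j = b /\ gstep g h
  end.

Definition Nmod M n b : model :=
  Model (St M + gad)%type (NRel M n b) (fun i x => match x with inl a => Val M i a | inr _ => False end).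

Ltac rs := cbn [Rel Nmod NRel gstep lab St] in *.

Lemma dead_GC0 M n b : dead (Nmod M n b) b (inr (GC 0)).
Proof. intros [c|[k| |i]] r; rs; try tauto; lia. Qed.

Lemma path_GC M n b k : pathb (Nmod M n b) b k (inr (GC k)) (inr (GC 0)).
Proof.
  induction k; simpl; auto. exists (inr (GC k)); split; auto.
Qed.

Lemma bound_GC M n b m : forall k y, pathb (Nmod M n b) b m (inr (GC k)) y -> dead (Nmod M n b) b y -> m <= k.
Proof.
  induction m; intros k y p d; [lia|].
  destruct p as [[c|[k'| |i]] [r p]]; rs; try tauto.
  destruct r as [_ r]. specialize (IHm _ _ p d). lia.
Qed.

Lemma path_GY M n b m : forall y, pathb (Nmod M n b) b m (inr GY) y -> y = inr GY.
Proof.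
  induction m; intros y p; simpl in p; auto.
  destruct p as [[c|[k'| |i]] [r p]]; rs; try tauto. auto.
Qed.

Lemma notdead_GY M n b : ~ dead (Nmod M n b) b (inr GY).
Proof. intros d. apply (d (inr GY)). rs. auto. Qed.

Lemma bound_GG M n b i m y : 1 <= i -> pathb (Nmod M n b) b m (inr (GG i)) y -> dead (Nmod M n b) b y -> m <= i.
Proof.
  intros Hi p d. destruct m.
  - lia.
  - destruct p as [[c|[k'| |i']] [r p]]; rs; try tauto.
    + destruct r as [_ e]; subst. apply bound_GC in p; auto. lia.
    + apply path_GY in p. subst. exfalso; eapply notdead_GY; eauto.
Qed.

Lemma notNN_GC M n b k : ~ NNp (Nmod M n b) b (inr (GC k)).
Proof.
  intros [[z r] H]. destruct z as [c|[k'| |i]]; rs; try tauto.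
  destruct r as [_ r].
  destruct (H (inr (GC 0))) as [w rw].
  - rs. split; auto; lia.
  - exact (dead_GC0 M n b w rw).
Qed.

Lemma notA_GC M n b k m : ~ sat (Nmod M n b) (inr (GC k)) (A_form b m).
Proof.
  rewrite sat_A. intros [_ [_ [y [r NN]]]].
  destruct y as [c|[k'| |i]]; rs; try tauto. eapply notNN_GC; eauto.
Qed.

Lemma notA_GY M n b m : ~ sat (Nmod M n b) (inr GY) (A_form b m).
Proof.
  rewrite sat_A. intros [[y [p d]] _]. apply path_GY in p; subst. eapply notdead_GY; eauto.
Qed.

Lemma notA_inl M n b m a : ~ sat (Nmod M n b) (inl a) (A_form b m).
Proof.
  rewrite sat_A. intros [_ [H _]]. apply H.
  exists (inr (GC 0)). split; [|apply dead_GC0].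
  exists (inr (GC m)). split; [rs; split; auto|apply path_GC].
Qed.

Lemma NN_GY M n b : NNp (Nmod M n b) b (inr GY).
Proof.
  split.
  - exists (inr GY). rs. auto.
  - intros y r. exists (inr GY). destruct y as [c|[k'| |i]]; rs; try tauto.
Qed.

Lemma A_GG M n b i m : 1 <= i -> 1 <= m ->
  (sat (Nmod M n b) (inr (GG i)) (A_form b m) <-> m = i).
Proof.
  intros Hi Hm. rewrite sat_A. split.
  - intros [[y [p d]] [H _]].
    pose proof (bound_GG _ _ _ _ _ _ Hi p d).
    destruct (Nat.eq_dec m i); auto. exfalso. apply H.
    exists (inr (GC 0)). split; [|apply dead_GC0].
    exists (inr (GC (i - 1))). split; [rs; auto|].
    destruct m as [|m0]; [lia|]. exists (inr (GC m0)). split; [rs; split; auto; lia|].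
    apply path_GC.
  - intros ->. split; [|split].
    + exists (inr (GC 0)). split; [|apply dead_GC0].
      destruct i; [lia|]. exists (inr (GC i)). split; [rs; split; auto; lia|].
      apply path_GC.
    + intros [y [p d]]. pose proof (bound_GG _ _ _ _ _ _ Hi p d). lia.
    + exists (inr GY). split; [rs; auto|]. apply NN_GY.
Qed.

Lemma B_inl M n b m a : 1 <= m ->
  (sat (Nmod M n b) (inl a) (B_form b m) <-> lab M n a (GG m)).
Proof.
  intros Hm. rewrite sat_B. split.
  - intros [y [r A]]. destruct y as [c|[k'| |i]].
    + exfalso; eapply notA_inl; eauto.
    + exfalso; eapply notA_GC; eauto.
    + exfalso; eapply notA_GY; eauto.
    + rs. destruct r as [_ r].
      assert (1 <= i) by (destruct r; lia).
      apply A_GG in A; auto. subst; auto.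
  - intros L. exists (inr (GG m)). split.
    + rs. auto.
    + apply A_GG; auto.
Qed.

Lemma B_inr M n b m g : ~ sat (Nmod M n b) (inr g) (B_form b m).
Proof.
  rewrite sat_B. intros [y [r A]].
  destruct y as [c|[k'| |i]]; rs; try tauto.
  - eapply notA_GC; eauto.
  - eapply notA_GY; eauto.
  - destruct g; rs; tauto.
Qed.

Lemma sigma_in n b i : 1 <= i <= S n -> sigma n b i = B_form b i.
Proof.
  intros H. unfold sigma.
  rewrite (proj2 (Nat.leb_le 1 i)) by lia. rewrite (proj2 (Nat.leb_le i (S n))) by lia.
  reflexivity.
Qed.

Definition Kmod M n b := msub (Nmod M n b) (sigma n b).

Lemma closure M n b : forall a g u, rel (Kmod M n b) a (inr g) u -> exists h, u = inr h.
Proof.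
  induction a; intros g u r; simpl in r.
  - destruct u as [c|h]; [cbn in r; tauto| eauto].
  - destruct r as [e _]; subst; eauto.
  - destruct r as [v [r1 r2]]. destruct (IHa1 _ _ r1) as [h ->]. eauto.
  - destruct r as [r|r]; eauto.
  - destruct r as [r _]; eauto.
  - remember (inr g) as x. revert g Heqx. induction r; intros g0 e; subst.
    + eauto.
    + eauto.
    + destruct (IHr1 _ eq_refl) as [h ->]. eauto.
Qed.

Lemma Val_K_top M n b x : Val (Kmod M n b) (S n) x <-> exists a, x = inl a.
Proof.
  simpl. rewrite sigma_in by lia. destruct x as [a|g].
  - rewrite B_inl by lia. simpl. split; eauto.
  - split; [intro H; exfalso; eapply B_inr; eauto | intros [a e]; discriminate].
Qed.

Lemma Val_K M n b i a : 1 <= i <= n -> (Val (Kmod M n b) i (inl a) <-> Val M i a).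
Proof.
  intros Hi. simpl. rewrite sigma_in by lia. rewrite B_inl by lia. simpl. split.
  - intros [[_ v]|e]; auto. lia.
  - auto.
Qed.

Lemma embed M n b :
  (forall f, (forall i, In i (vars_f f) -> 1 <= i <= n) ->
     forall a, sat (Kmod M n b) (inl a) (tr_f n f) <-> sat M a f) /\
  (forall p, (forall i, In i (vars_p p) -> 1 <= i <= n) ->
     forall x y, rel (Kmod M n b) (tr_p n p) (inl x) (inl y) <-> rel M p x y).
Proof.
  apply form_prog_ind; intros.
  - apply Val_K. apply H. simpl; auto.
  - simpl; reflexivity.
  - simpl. rewrite (H (fun i h => H1 i (in_app_l _ _ _ h))), (H0 (fun i h => H1 i (in_app_r _ _ _ h))). reflexivity.
  - pose proof (H (fun i h => H1 i (in_app_l _ _ _ h))) as Hp.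
    pose proof (H0 (fun i h => H1 i (in_app_r _ _ _ h))) as Hf.
    simpl. split.
    + intros H2 t r. apply Hf. apply H2.
      * apply Hp; auto.
      * apply Val_K_top; eauto.
    + intros H2 t r v. destruct t as [c|g].
      * apply Hf. apply H2. apply Hp. exact r.
      * apply Val_K_top in v. destruct v as [? e]; discriminate.
  - simpl. reflexivity.
  - simpl. split; intros [e s]; [injection e as e|]; subst; split; auto.
    + apply H; auto.
    + apply H; auto.
  - simpl. split.
    + intros [v [r1 r2]]. destruct v as [w|g].
      * exists w; split; [apply (H (fun i h => H1 i (in_app_l _ _ _ h)))|apply (H0 (fun i h => H1 i (in_app_r _ _ _ h)))]; auto.
      * destruct (closure _ _ _ _ _ _ r2) as [h e]; discriminate.
    + intros [w [r1 r2]]. exists (inl w); split; [apply (H (fun i h => H1 i (in_app_l _ _ _ h)))|apply (H0 (fun i h => H1 i (in_app_r _ _ _ h)))]; auto.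
  - simpl. rewrite (H (fun i h => H1 i (in_app_l _ _ _ h))), (H0 (fun i h => H1 i (in_app_r _ _ _ h))). reflexivity.
  - simpl. rewrite (H (fun i h => H1 i (in_app_l _ _ _ h))), (H0 (fun i h => H1 i (in_app_r _ _ _ h))). reflexivity.
  - simpl. split.
    + intros C. remember (inl x) as u. remember (inl y) as v. revert x y Hequ Heqv.
      induction C; intros x' y' e1 e2; subst.
      * apply rt_step. apply H; auto.
      * injection e2 as e2; subst. apply rt_refl.
      * destruct y as [w|g].
        -- eapply rt_trans; [eapply IHC1|eapply IHC2]; eauto.
        -- destruct (closure M n b (Star (tr_p n p)) g (inl y') C2) as [h e]; discriminate.
    + intros C. induction C.
      * apply rt_step. apply H; auto.
      * apply rt_refl.
      * eapply rt_trans; eauto.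
Qed.

Theorem lemma3 (n l : nat) (phi : form) :
  1 <= l ->
  (forall i, In i (vars_f phi) -> 1 <= i <= n) ->
  (forall j, In j (atoms_f phi) -> 1 <= j <= l) ->
  (satisfiable phi <-> satisfiable (star_form n l phi)).
Proof.
  intros Hl Hv Ha. split.
  - intros [M [s H]]. set (b := first_atom phi).
    exists (Nmod M n b), (inl s). unfold star_form.
    apply (proj1 (subst_sat (Nmod M n b) (sigma n b))).
    change (sat (Kmod M n b) (inl s) (hat n l phi)).
    unfold hat, Theta. rewrite !sat_And. split; [split|].
    + apply Val_K_top; eauto.
    + simpl. intros t _ D. destruct t as [c|g].
      * apply Val_K_top; eauto.
      * exfalso. apply D. intros v r V.
        destruct (closure _ _ _ _ _ _ r) as [h ->].
        apply Val_K_top in V. destruct V as [? e]; discriminate.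
    + apply embed; auto.
  - intros [N [s H]]. unfold star_form in H.
    apply (proj1 (subst_sat N _)) in H.
    set (K := msub N (sigma n (first_atom phi))) in H.
    unfold hat, Theta in H. rewrite !sat_And in H. destruct H as [[Hp Hb] Ht].
    assert (Hcl : forall t, Rr K s l t -> forall v, rel K (gamma l) t v -> Val K (S n) v -> Val K (S n) t).
    { intros t Rt v r V. apply (Hb t Rt). intro D. exact (D v r V). }
    destruct (relat K s n l Hl Hcl) as [Hf _].
    exists (Mrel K s n l), s. apply Hf; auto.
    split; auto. apply rt_refl.
Qed.
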